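(* Let $K\subseteq\mathcal I_{int}$ be finite, let $A=(Q,\mathsf{init},2^{\Sigma\cup K\cup\{\mathsf{anch}\}},\delta,F)$ be an NFA whose language consists of collapsed $K$-interval words over $\Sigma$, and let $\mathsf{seq}$ be a type over $K$. Then every word accepted by $A_{\mathsf{seq}}$ is a normalized word of type $\mathsf{seq}$, i.e. $L(A_{\mathsf{seq}})\subseteq\mathsf{Norm}(W_{\mathsf{seq}})$.
   Context: Fix a finite set $\Sigma$ of propositions; $\mathcal I_{int}$ is the set of open, half-open or closed real intervals with endpoints in $\mathbb Z\cup\{-\infty,\infty\}$. Interval words: for finite $K\subseteq\mathcal I_{int}$ and a fresh symbol $\mathsf{anch}$, a $K$-interval word over $\Sigma$ is a finite word $w=a_1\cdots a_n$ with $a_j\subseteq\Sigma\cup K\cup\{\mathsf{anch}\}$ such that exactly one position $i$, denoted $\mathsf{anch}(w)$, has $\mathsf{anch}\in a_i$, and $a_i\subseteq\Sigma\cup\{\mathsf{anch}\}$ there. Position $j$ is $I$-time restricted iff $I\in a_j$. $w$ is collapsed iff every $a_j$ contains at most one element of $K$. $\mathsf{first}(w,I)$, $\mathsf{last}(w,I)$ are the least and greatest $I$-time restricted positions ($\bot$ if none). For a collapsed $K$-interval word $w$, $\mathsf{Norm}(w)$ is the $K$-interval word $b_1\cdots b_n$ with $b_j\cap(\Sigma\cup\{\mathsf{anch}\})=a_j\cap(\Sigma\cup\{\mathsf{anch}\})$ and, for $I\in K$, $I\in b_j$ iff $j\in\{\mathsf{first}(w,I),\mathsf{last}(w,I)\}$;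 for a set $L$ of words, $\mathsf{Norm}(L)=\{\mathsf{Norm}(w):w\in L\}$. Types: for a collapsed $K$-interval word $w$, let $\mathsf{Boundary}(w)$ be the set of positions that are $\mathsf{anch}(w)$ or equal to $\mathsf{first}(w,I)$ or $\mathsf{last}(w,I)$ for some $I\in K$; listing them as $p_1<\dots<p_m$, the type of $w$ is the word $c_1\cdots c_m$ over $K\cup\{\mathsf{anch}\}$ where $c_k$ is the unique element of $a_{p_k}\setminus\Sigma$. A type over $K$ is any word over $K\cup\{\mathsf{anch}\}$ arising this way (it contains $\mathsf{anch}$ exactly once and each $I\in K$ at most twice). $W_{\mathsf{seq}}$ is the set of collapsed $K$-interval words of type $\mathsf{seq}$. The automaton $A_{\mathsf{seq}}$: for $A$ as in the claim and a type $\mathsf{seq}=c_1\cdots c_m$, $A_{\mathsf{seq}}=(Q\times\{1,\dots,m+1\},(\mathsf{init},1),2^{\Sigma\cup K\cup\{\mathsf{anch}\}},\delta_{\mathsf{seq}},F\times\{m+1\})$ where, for $q\in Q$ and a letter $S$: for $1\le i\le m$, (i) if $c_i\in S$ then $\delta_{\mathsf{seq}}((q,i),S)=\delta(q,S)\times\{i+1\}$; (ii) if $c_i\notin S$ and $S\not\subseteq\Sigma$ then $\delta_{\mathsf{seq}}((q,i),S)=\emptyset$; (iii) if $S\subseteq\Sigma$ then $\delta_{\mathsf{seq}}((q,i),S)=\big(\delta(q,S)\cup\bigcup_{I'\in K_i}\delta(q,S\cup\{I'\})\big)\times\{i\}$, where $K_i=\{I'\in K:\exists i'<i\le i''\text{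 with }c_{i'}=c_{i''}=I'\}$; and $\delta_{\mathsf{seq}}((q,m+1),S)=\delta(q,S)\times\{m+1\}$ if $S\subseteq\Sigma$ and $\emptyset$ otherwise. *)

(* Defs.v *)
From HB Require Import structures.
From mathcomp Require Import all_boot all_order all_algebra.
From mathcomp Require Import finmap.
Set Implicit Arguments. Unset Strict Implicit. Unset Printing Implicit Defensive.
Local Open Scope fset_scope.

(* An endpoint is [Some z] (z : int) or [None] (= -oo as a lower endpoint,
   = +oo as an upper endpoint); the boolean says whether the endpoint is
   included (closed). *)
Definition bound := option int.
Definition zinterval := ((bound * bool) * (bound * bool))%type.
Definition interval_ok (I : zinterval) : bool :=
  let: ((lo, clo), (hi, chi)) := I in
  ((lo != None) || ~~ clo) && ((hi != None) || ~~ chi).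

Definition sym (Sigma : finType) (K : {fset zinterval}) : finType :=
  ((Sigma + K) + unit)%type.
Definition letter (Sigma : finType) (K : {fset zinterval}) := {set sym Sigma K}.

Section Words.
Variables (Sigma : finType) (K : {fset zinterval}).

Definition inS (a : Sigma) : sym Sigma K := inl (inl a).
Definition inK (I : K) : sym Sigma K := inl (inr I).
Definition anch : sym Sigma K := inr tt.

Definition propsym : {set sym Sigma K} :=
  [set x | if x is inl (inl _) then true else false].

Definition embed (c : (K + unit)%type) : sym Sigma K :=
  match c with inl k => inK k | inr _ => anch end.

Implicit Types (w : seq (letter Sigma K)) (S : letter Sigma K).

Definition is_interval_word w : bool :=
  (count (fun S => anch \in S) w == 1%N) &&
  all (fun S => (anch \in S) ==> [forall I : K, inK I \notin S]) w.

Definition collapsed w : bool :=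
  all (fun S => #|[set I : K | inK I \in S]| <= 1)%N w.

Definition Kpos w (I : K) : seq nat :=
  [seq j <- iota 0 (size w) | inK I \in nth set0 w j].
Definition firstpos w (I : K) : option nat := ohead (Kpos w I).
Definition lastpos w (I : K) : option nat := ohead (rev (Kpos w I)).

Definition Norm w : seq (letter Sigma K) :=
  [seq [set x : sym Sigma K |
          match x with
          | inl (inr k) => (firstpos w k == Some j) || (lastpos w k == Some j)
          | _ => x \in nth set0 w j
          end] | j <- iota 0 (size w)].

Definition boundary w (j : nat) : bool :=
  (j < size w)%N &&
  ((anch \in nth set0 w j) ||
   [exists I : K, (firstpos w I == Some j) || (lastpos w I == Some j)]).

(* the element of a letter outside Σ (unique for boundary letters of a
   collapsed zinterval word) *)
Definition elt_of S : option (K + unit)%type :=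
  if anch \in S then Some (inr tt)
  else omap inl [pick I : K | inK I \in S].

Definition typeof w : seq (K + unit)%type :=
  pmap (fun j => elt_of (nth set0 w j)) [seq j <- iota 0 (size w) | boundary w j].

Definition is_type (sq : seq (K + unit)%type) : Prop :=
  exists w, [/\ is_interval_word w, collapsed w & typeof w = sq].

Definition W_seq (sq : seq (K + unit)%type) w : Prop :=
  [/\ is_interval_word w, collapsed w & typeof w = sq].

End Words.

Fixpoint reach (Q X : Type) (d : Q -> X -> Q -> bool) (q : Q) (w : seq X)
    (q' : Q) : Prop :=
  match w with
  | [::] => q = q'
  | a :: w' => exists q1, d q a q1 /\ reach d q1 w' q'
  end.

Definition accepts (Q X : Type) (d : Q -> X -> Q -> bool) (init : Q)
    (fin : Q -> bool) (w : seq X) : Prop :=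
  exists qf, reach d init w qf /\ fin qf.

Definition accA (Sigma : finType) (K : {fset zinterval}) (Q : finType)
    (init : Q) (delta : Q -> letter Sigma K -> {set Q}) (F : {set Q})
    (w : seq (letter Sigma K)) : Prop :=
  accepts (fun q S q' => q' \in delta q S) init (fun q => q \in F) w.

Section Aseq.
Variables (Sigma : finType) (K : {fset zinterval}) (Q : finType).
Variables (delta : Q -> letter Sigma K -> {set Q}) (sq : seq (K + unit)%type).

Let m := size sq.
(* c_i, 1-based (1 <= i <= m) *)
Definition cseq (i : nat) : (K + unit)%type := nth (inr tt) sq i.-1.

Definition Kset (i : nat) : {set K} :=
  [set I : K | [exists i1 : 'I_m.+1, exists i2 : 'I_m.+1,
     [&& (0 < i1)%N, (i1 < i)%N, (i <= i2)%N,
         cseq i1 == inl I & cseq i2 == inl I]]].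

(* transition relation of A_seq on states Q × {1,...,m+1}
   (states with index outside 1..m+1 have no transitions) *)
Definition delta_seq (p : Q * nat) (S : letter Sigma K) (p' : Q * nat) : bool :=
  let: (q, i) := p in
  let: (q', i') := p' in
  if (1 <= i <= m)%N then
    if @embed Sigma K (cseq i) \in S then (q' \in delta q S) && (i' == i.+1)
    else if ~~ (S \subset propsym Sigma K) then false
    else (i' == i) &&
         ((q' \in delta q S) ||
          [exists I : K, (I \in Kset i) && (q' \in delta q (@inK Sigma K I |: S))])
  else if i == m.+1 then
    (S \subset propsym Sigma K) && (q' \in delta q S) && (i' == m.+1)
  else false.

Definition accAseq (init : Q) (F : {set Q}) (w : seq (letter Sigma K)) : Prop :=
  accepts delta_seq (init, 1%N) (fun p => (p.1 \in F) && (p.2 == m.+1)) w.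

End Aseq.

(* Main.v *)
Require Import Defs.
From HB Require Import structures.
From mathcomp Require Import all_boot all_order all_algebra.
From mathcomp Require Import finmap.
Set Implicit Arguments. Unset Strict Implicit. Unset Printing Implicit Defensive.

Lemma head_char (s : seq nat) j : sorted ltn s ->
  (ohead s == Some j) = (j \in s) && all (fun y => j <= y) s.
Proof.
case: s => [|x s] //= Hs.
have Hall := order_path_min ltn_trans Hs.
have -> : (Some x == Some j) = (j == x) by rewrite eq_sym.
rewrite in_cons; case: (eqVneq j x) => [->|Hjx] /=.
  rewrite leqnn /=; apply/esym/allP => y Hy.
  by apply: ltnW; move/allP: Hall; apply.
apply/esym; apply/negP => /andP[Hj /andP[Hle _]].
have : x < j by move/allP: Hall; apply.
by rewrite ltnNge Hle.
Qed.

Lemma last_char (s : seq nat) j : sorted ltn s ->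
  (ohead (rev s) == Some j) = (j \in s) && all (fun y => y <= j) s.
Proof.
move=> Hs0; have : sorted (fun x y => y < x) (rev s) by rewrite rev_sorted.
rewrite -mem_rev -all_rev.
case: (rev s) => [|x t] //= Hs.
have Hall := order_path_min (leT:=fun x y => y < x) (fun a b c h1 h2 => ltn_trans h2 h1) Hs.
have -> : (Some x == Some j) = (j == x) by rewrite eq_sym.
rewrite in_cons; case: (eqVneq j x) => [->|Hjx] /=.
  rewrite leqnn /=; apply/esym/allP => y Hy.
  by apply: ltnW; move/allP: Hall; apply.
apply/esym; apply/negP => /andP[Hj /andP[Hle _]].
have : j < x by move/allP: Hall; apply.
by rewrite ltnNge Hle.
Qed.

Lemma fl_char (s : seq nat) j : sorted ltn s ->
  ((ohead s == Some j) || (ohead (rev s) == Some j)) =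
  (j \in s) && ~~ (has (fun y => y < j) s && has (fun y => j < y) s).
Proof.
move=> Hs; rewrite head_char // last_char //.
rewrite -andb_orr; congr (_ && _).
rewrite negb_and -!all_predC.
congr (_ || _); apply: eq_all => y /=; by rewrite -leqNgt.
Qed.

Lemma count_take_mono T (p : pred T) s j1 j2 : j1 <= j2 ->
  count p (take j1 s) <= count p (take j2 s).
Proof.
move=> H; rewrite -(minn_idPl H) take_min -{2}(cat_take_drop j1 (take j2 s)) count_cat.
exact: leq_addr.
Qed.

Lemma count_take_S T (x0 : T) (p : pred T) s j : j < size s ->
  count p (take j.+1 s) = count p (take j s) + p (nth x0 s j).
Proof. by move=> H; rewrite (take_nth x0 H) -cats1 count_cat /= addn0. Qed.

Lemma exists_take T (x0 : T) (p : pred T) s t : t < count p s ->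
  exists j, [/\ j < size s, p (nth x0 s j) & count p (take j s) = t].
Proof.
elim: s t => [|a s IH] t //=.
case Ha: (p a) => /=.
  case: t => [|t] H; first by exists 0; rewrite Ha.
  move: H; rewrite ltnS => /IH [j [H1 H2 H3]]; exists j.+1; by rewrite /= Ha H3.
rewrite add0n => /IH [j [H1 H2 H3]]; exists j.+1; by rewrite /= Ha H3.
Qed.

Lemma count_take_iota T (x0 : T) (p : pred T) s :
  [seq count p (take j s) | j <- [seq j <- iota 0 (size s) | p (nth x0 s j)]]
  = iota 0 (count p s).
Proof.
elim: s => [|a s IH] //=.
have E1 : iota 1 (size s) = [seq 1 + i | i <- iota 0 (size s)] by rewrite -iotaDl.
rewrite E1 filter_map.
have F : [seq i <- iota 0 (size s) | preim (addn 1) (fun j => p (nth x0 (a::s) j)) i] = [seq j <- iota 0 (size s) | p (nth x0 s j)].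
  by apply: eq_filter => j.
have E2 : [seq count p (take j (a :: s)) | j <- [seq 1 + i | i <- [seq j <- iota 0 (size s) | p (nth x0 s j)]]] = [seq p a + i | i <- iota 0 (count p s)].
  by rewrite -IH -!map_comp; apply: eq_map => j /=; rewrite add0n.
rewrite F; case: (p a) E2 => /= E2.
  by rewrite E2 add0n -iotaDl.
transitivity [seq 0 + i | i <- iota 0 (count p s)]; first exact: E2.
by rewrite -iotaDl.
Qed.

Definition nS (Sigma : finType) (K : {fset zinterval}) (S : letter Sigma K) : bool :=
  ~~ (S \subset propsym Sigma K).

Definition lok (Sigma : finType) (K : {fset zinterval}) (sq : seq (K + unit)%type)
  (k : nat) (S T : letter Sigma K) : Prop :=
  if nS S then @embed Sigma K (cseq sq k) \in S /\ T = S
  else T = S \/ exists I : K, I \in Kset sq k /\ T = @inK Sigma K I |: S.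

Lemma embed_notS (Sigma : finType) (K : {fset zinterval}) c :
  (@embed Sigma K c \in propsym Sigma K) = false.
Proof. by case: c => [k|[]]; rewrite inE. Qed.

Lemma run (Sigma : finType) (K : {fset zinterval}) (Q : finType)
  (delta : Q -> letter Sigma K -> {set Q}) (sq : seq (K + unit)%type)
  (w' : seq (letter Sigma K)) q i qf :
  reach (delta_seq delta sq) (q, i) w' (qf, (size sq).+1) -> 0 < i ->
  exists w, [/\ reach (fun q S q' => q' \in delta q S) q w qf, size w = size w',
     i + count (@nS Sigma K) w' = (size sq).+1 &
     forall j, j < size w' ->
       lok sq (i + count (@nS Sigma K) (take j w')) (nth set0 w' j) (nth set0 w j)].
Proof.
elim: w' q i => [|a w' IH] q i /=.
  by case=> -> -> _; exists [::]; split; rewrite ?addn0.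
case=> [[q1 i1] [Hd Hr]] Hi.
have ext : forall (T : letter Sigma K) (b : bool) i2, q1 \in delta q T ->
    reach (delta_seq delta sq) (q1, i2) w' (qf, (size sq).+1) ->
    i2 = i + b -> 0 < i2 -> nS a = b -> lok sq i a T ->
    exists w, [/\ reach (fun q S q' => q' \in delta q S) q w qf, size w = (size (a :: w')),
     i + count (@nS Sigma K) (a :: w') = (size sq).+1 &
     forall j, j < size (a :: w') ->
       lok sq (i + count (@nS Sigma K) (take j (a :: w'))) (nth set0 (a :: w') j) (nth set0 w j)].
  move=> T b i2 HT Hr2 Hi2 Hpos Hb Hl.
  have [w [H1 H2 H3 H4]] := IH q1 i2 Hr2 Hpos.
  exists (T :: w); split => /=.
  - by exists q1.
  - by rewrite H2.
  - by rewrite Hb addnA -Hi2.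
  - case=> [|j] Hj /=; first by rewrite addn0.
    by rewrite Hb addnA -Hi2; apply: H4.
move: Hd; rewrite /delta_seq.
case: ifP => Hrange.
  case: ifP => Hin.
    case/andP => Hq /eqP Hi1.
    have HnS : nS a = true.
      apply/negP => Hsub; move/subsetP: Hsub => /(_ _ Hin); by rewrite embed_notS.
    apply: (ext a true i1) => //.
    - by rewrite Hi1 addn1.
    - by rewrite Hi1.
    - by rewrite /lok HnS.
  case: ifP => // Hsub; case/andP => /eqP Hi1 /orP [Hq|/existsP [I /andP [HI Hq]]].
    apply: (ext a false i1) => //.
    - by rewrite Hi1 addn0.
    - by rewrite Hi1.
    - by rewrite /lok /nS Hsub; left.
  apply: (ext (@inK Sigma K I |: a) false i1) => //.
  - by rewrite Hi1 addn0.
  - by rewrite Hi1.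
  - by rewrite /lok /nS Hsub; right; exists I.
case: ifP => // /eqP Him; case/andP => /andP [Hsub Hq] /eqP Hi1.
apply: (ext a false i1) => //.
- by rewrite Hi1 Him addn0.
- by rewrite Hi1.
- by rewrite /nS Hsub.
- by rewrite /lok /nS Hsub /=; left.
Qed.

Lemma mem_Kpos (Sigma : finType) (K : {fset zinterval}) (w : seq (letter Sigma K)) I j :
  (j \in Kpos w I) = (j < size w) && (@inK Sigma K I \in nth set0 w j).
Proof. by rewrite /Kpos mem_filter mem_iota add0n andbC. Qed.

Lemma sorted_Kpos (Sigma : finType) (K : {fset zinterval}) (w : seq (letter Sigma K)) I :
  sorted ltn (Kpos w I).
Proof. apply: sorted_filter; [exact: ltn_trans | exact: iota_ltn_sorted]. Qed.

Lemma fl_Kpos (Sigma : finType) (K : {fset zinterval}) (w : seq (letter Sigma K)) I j :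
  ((firstpos w I == Some j) || (lastpos w I == Some j)) =
  (j \in Kpos w I) && ~~ (has (fun y => y < j) (Kpos w I) && has (fun y => j < y) (Kpos w I)).
Proof. rewrite /firstpos /lastpos; apply: fl_char; exact: sorted_Kpos. Qed.

Lemma coll_eq (Sigma : finType) (K : {fset zinterval}) (w : seq (letter Sigma K)) j I1 I2 :
  collapsed w -> j < size w -> @inK Sigma K I1 \in nth set0 w j ->
  @inK Sigma K I2 \in nth set0 w j -> I1 = I2.
Proof.
move=> /allP Hc Hj H1 H2.
have := Hc _ (mem_nth set0 Hj) => /card_le1P /(_ I1).
rewrite inE => /(_ H1) /(_ I2); rewrite !inE H2 => /esym /eqP //.
Qed.

Lemma intv_anch (Sigma : finType) (K : {fset zinterval}) (w : seq (letter Sigma K)) j I :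
  is_interval_word w -> j < size w -> anch Sigma K \in nth set0 w j ->
  @inK Sigma K I \in nth set0 w j = false.
Proof.
move=> /andP [_ /allP Hc] Hj Ha.
have := Hc _ (mem_nth set0 Hj); rewrite Ha /= => /forallP /(_ I).
by move/negbTE.
Qed.

Lemma count_pmap (A B : Type) (g : A -> option B) (P : pred B) s :
  count P (pmap g s) = count (fun x => if g x is Some y then P y else false) s.
Proof. by elim: s => //= x s IH; case: (g x) => [y|] /=; rewrite IH. Qed.

Lemma pmap_some (A : eqType) (B : Type) (g : A -> option B) (f : A -> B) s :
  {in s, forall x, g x = Some (f x)} -> pmap g s = map f s.
Proof.
elim: s => //= x s IH H.
rewrite H ?mem_head //= IH // => y Hy; apply: H; by rewrite in_cons Hy orbT.
Qed.

Lemma count_opt_iota n (o : option nat) :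
  count (fun j => o == Some j) (iota 0 n) <= 1.
Proof.
case: o => [k|]; last by rewrite (eq_count (a2 := pred0)) // count_pred0.
rewrite (eq_count (a2 := pred1 k)); last by move=> j /=; rewrite eq_sym.
by rewrite count_uniq_mem ?iota_uniq // leq_b1.
Qed.

Lemma type_two (Sigma : finType) (K : {fset zinterval}) (sq : seq (K + unit)%type) :
  @is_type Sigma K sq -> forall (I : K) a b c x0, a < b -> b < c -> c < size sq ->
  nth x0 sq a = inl I -> nth x0 sq b = inl I -> nth x0 sq c = inl I -> False.
Proof.
case=> w0 [Hiw Hcol Hty] I a b c x0 Hab Hbc Hc Ha Hb Hc'.
have H3 : 3 <= count (pred1 (inl I)) sq.
  rewrite -{1}(mkseq_nth x0 sq) /mkseq count_map -size_filter.
  have -> : 3 = size [:: a; b; c] by [].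
  apply: uniq_leq_size.
    rewrite /= !inE !negb_or (ltn_eqF Hab) (ltn_eqF (ltn_trans Hab Hbc)) (ltn_eqF Hbc) //.
  move=> y; rewrite !inE mem_filter mem_iota add0n /= => /or3P [] /eqP ->; apply/andP; split.
  - by rewrite Ha.
  - by rewrite (ltn_trans (ltn_trans Hab Hbc) Hc).
  - by rewrite Hb.
  - by rewrite (ltn_trans Hbc Hc).
  - by rewrite Hc'.
  - by [].
have H2 : count (pred1 (inl I)) sq <= 2.
  rewrite -Hty /typeof count_pmap count_filter.
  set fI := fun j => firstpos w0 I == Some j.
  set lI := fun j => lastpos w0 I == Some j.
  apply: (@leq_trans (count (predU fI lI) (iota 0 (size w0)))).
    apply: sub_count => j /=; rewrite /fI /lI.
    case/andP => Hel /andP [Hj Hbd].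
    move: Hel; rewrite /elt_of.
    case: ifP => Hanch //.
    case: pickP => [I' HI'|] //= /eqP [] EI.
    rewrite -EI {EI}; rewrite Hanch /= in Hbd.
    case/existsP: Hbd => I'' H''.
    have : j \in Kpos w0 I''.
      move: H''; rewrite fl_Kpos; by case/andP.
    rewrite mem_Kpos => /andP [_ H4].
    by rewrite -(coll_eq Hcol Hj H4 HI').
  apply: (@leq_trans (count fI (iota 0 (size w0)) + count lI (iota 0 (size w0)))).
    by rewrite -count_predUI leq_addr.
  by rewrite -[2]/(1 + 1); apply: leq_add; apply: count_opt_iota.
by have := leq_trans H3 H2.
Qed.
From mathcomp Require Import zify.
Local Open Scope fset_scope.


Theorem proposition3 (Sigma : finType) (K : {fset zinterval})
  (HK : forall I : zinterval, I \in K -> interval_ok I)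
  (Q : finType) (init : Q) (delta : Q -> letter Sigma K -> {set Q}) (F : {set Q})
  (HA : forall w : seq (letter Sigma K),
          accA init delta F w -> is_interval_word w /\ collapsed w)
  (sq : seq (K + unit)%type) (Hsq : @is_type Sigma K sq) :
  forall w' : seq (letter Sigma K),
    accAseq delta sq init F w' ->
    exists w : seq (letter Sigma K), @W_seq Sigma K sq w /\ w' = Norm w.
Proof.
move=> w' [[qf i'] [Hrun /andP [HqF /eqP /= Hi']]].
subst i'.
have [w [HrA Hsz Hcnt Hlok]] := run Hrun (ltn0Sn 0).
have [Hiw Hcol] := HA w (ex_intro _ qf (conj HrA HqF)).
set m := size sq in Hcnt Hrun.
have {}Hcnt : count (@nS Sigma K) w' = m by move: Hcnt; rewrite add1n => [[]].
set n := size w' in Hsz Hlok.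
pose W j := nth set0 w j.
pose W' j := nth set0 w' j.
pose nb j := count (@nS Sigma K) (take j w').
have Hlok' : forall j, j < n -> lok sq (nb j).+1 (W' j) (W j) by move=> j /Hlok; rewrite add1n.
have Fagree : forall j x, j < n -> (forall I, x != @inK Sigma K I) -> (x \in W j) = (x \in W' j).
  move=> j x Hj Hx; move: (Hlok' j Hj); rewrite /lok; case: ifP => _.
    by case=> _ ->.
  case=> [-> //|[I [_ ->]]]; by rewrite in_setU1 (negbTE (Hx I)).
have Fbd : forall j, j < n -> nS (W' j) -> W j = W' j /\ @embed Sigma K (cseq sq (nb j).+1) \in W' j.
  by move=> j Hj HnS; move: (Hlok' j Hj); rewrite /lok HnS; case=> ? ?.
have Fnbd : forall j I, j < n -> ~~ nS (W' j) -> (@inK Sigma K I \in W' j) = false.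
  move=> j I Hj; rewrite /nS negbK => /subsetP Hs; apply/negP => /Hs; by rewrite inE.
have FnbdK : forall j I, j < n -> ~~ nS (W' j) -> @inK Sigma K I \in W j -> I \in Kset sq (nb j).+1.
  move=> j I Hj HnS; move: (Hlok' j Hj); rewrite /lok (negbTE HnS).
  case=> [->|[I' [HI' ->]]]; first by rewrite Fnbd.
  by rewrite in_setU1 Fnbd // orbF => /eqP [] ->.
have HjW : forall j, j < n -> j < size w by move=> j; rewrite Hsz.
have F1 : forall j I, j < n -> nS (W' j) -> (@inK Sigma K I \in W' j) = (cseq sq (nb j).+1 == inl I).
  move=> j I Hj HnS; have [EW Hc] := Fbd j Hj HnS.
  have EW' : nth set0 w j = nth set0 w' j := EW.
  move: Hc; case: (cseq sq (nb j).+1) => [I'|[]] /= Hc.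
    apply/idP/idP => [HI|/eqP [] <- //].
    apply/eqP; congr inl; apply: (coll_eq Hcol (HjW j Hj)); by rewrite EW'.
  apply/negbTE; change (inK Sigma I \notin nth set0 w' j).
  have Ha : anch Sigma K \in nth set0 w j by rewrite EW'.
  by rewrite -EW' (intv_anch I Hiw (HjW j Hj) Ha).
have nbS : forall j, j < n -> nb j.+1 = (nb j + nS (W' j))%N by move=> j Hj; exact: count_take_S.
have nb_mono : forall j1 j2, j1 <= j2 -> nb j1 <= nb j2 by move=> j1 j2; exact: count_take_mono.
have nb_lt : forall j1 j2, j1 < j2 -> j1 < n -> nS (W' j1) -> nb j1 < nb j2.
  move=> j1 j2 H12 Hj1 HnS; apply: (leq_trans _ (nb_mono _ _ H12)).
  by rewrite nbS // HnS addn1.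
have nb_m : forall j, j < n -> nS (W' j) -> nb j < m.
  move=> j Hj HnS; rewrite -Hcnt; apply: (leq_trans (nb_lt j n Hj Hj HnS)).
  by rewrite /nb take_size.
have ex_bd : forall t, t < m -> exists j, [/\ j < n, nS (W' j) & nb j = t].
  move=> t; rewrite -Hcnt => /(exists_take set0) [j [H1 H2 H3]]; by exists j.
have S1 : forall j0 I, j0 < n -> @inK Sigma K I \in W j0 ->
    (nS (W' j0) /\ cseq sq (nb j0).+1 = inl I) \/
    exists jl jr, [/\ jl < j0, j0 < jr, jr < n, nS (W' jl) /\ nS (W' jr) &
                  cseq sq (nb jl).+1 = inl I /\ cseq sq (nb jr).+1 = inl I].
  move=> j0 I Hj0 HI; case HnS: (nS (W' j0)).
    left; split => //; have [EW _] := Fbd j0 Hj0 HnS.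
    by apply/eqP; rewrite -F1 // -EW.
  right; have := FnbdK j0 I Hj0 (negbT HnS) HI.
  rewrite inE => /existsP [i1 /existsP [i2 /and5P [H0 H1 H2 /eqP E1 /eqP E2]]].
  have Hi1 := ltn_ord i1; have Hi2 := ltn_ord i2.
  have [jl [Hjl HnSl Enl]] : exists jl, [/\ jl < n, nS (W' jl) & nb jl = i1.-1].
    apply: (ex_bd); have Hm : m = size sq by []; lia.
  have [jr [Hjr HnSr Enr]] : exists jr, [/\ jr < n, nS (W' jr) & nb jr = i2.-1].
    apply: (ex_bd); have Hm : m = size sq by []; lia.
  exists jl, jr; split => //.
  - rewrite ltnNge; apply/negP => Hle; have := nb_mono _ _ Hle; lia.
  - rewrite ltnNge; apply/negP => Hle.
    have Hne : jr != j0 by apply/eqP => E; move: HnS; rewrite -E HnSr.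
    have Hlt : jr < j0 by rewrite ltn_neqAle Hne Hle.
    have := nb_lt _ _ Hlt Hjr HnSr; lia.
  - split; [rewrite Enl prednK // | rewrite Enr prednK //; lia].
have Bl : forall j0 I, j0 < n -> @inK Sigma K I \in W j0 ->
    exists jl, [/\ jl <= j0, jl < n, nS (W' jl) & cseq sq (nb jl).+1 = inl I].
  move=> j0 I Hj0 HI; case: (S1 j0 I Hj0 HI) => [[H1 H2]|[jl [jr [H1 H2 H3 [H4 _] [H6 _]]]]].
    by exists j0.
  exists jl; split => //; lia.
have Br : forall j0 I, j0 < n -> @inK Sigma K I \in W j0 ->
    exists jr, [/\ j0 <= jr, jr < n, nS (W' jr) & cseq sq (nb jr).+1 = inl I].
  move=> j0 I Hj0 HI; case: (S1 j0 I Hj0 HI) => [[H1 H2]|[jl [jr [H1 H2 H3 [_ H5] [_ H7]]]]].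
    by exists j0.
  exists jr; split => //; lia.
have inKbd : forall j I, j < n -> nS (W' j) -> cseq sq (nb j).+1 = inl I -> j \in Kpos w I.
  move=> j I Hj HnS Ec; rewrite mem_Kpos HjW //=.
  have [EW Hc] := Fbd j Hj HnS; move: Hc; rewrite Ec => Hc.
  by change (inK Sigma I \in W j); rewrite EW.
have P : forall j I, j < n ->
    ((firstpos w I == Some j) || (lastpos w I == Some j)) = (@inK Sigma K I \in W' j).
  move=> j I Hj; rewrite fl_Kpos mem_Kpos HjW //=.
  apply/idP/idP.
    case/andP => HI Hnot; case: (S1 j I Hj HI) => [[HnS _]|[jl [jr [H1 H2 H3 [H4 H5] [H6 H7]]]]].
      by have [<- _] := Fbd j Hj HnS.
    exfalso; move/negP: Hnot; apply; apply/andP; split; apply/hasP.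
      by exists jl => //; apply: inKbd => //; lia.
    by exists jr => //; apply: inKbd.
  move=> HI; have HnS : nS (W' j).
    by case HnS: (nS (W' j)) => //; rewrite Fnbd ?HnS in HI.
  have [EW _] := Fbd j Hj HnS.
  have Ec : cseq sq (nb j).+1 = inl I by apply/eqP; rewrite -F1.
  have EW' : nth set0 w j = nth set0 w' j := EW.
  rewrite EW' (_ : inK Sigma I \in nth set0 w' j = true) //=; apply/negP => /andP [/hasP [j1 Hj1 Hlt] /hasP [j2 Hj2 Hgt]].
  move: Hj1 Hj2; rewrite !mem_Kpos !Hsz => /andP [Hj1 HI1] /andP [Hj2 HI2].
  have [jl [Hl1 Hl2 Hl3 Hl4]] := Bl j1 I Hj1 HI1.
  have [jr [Hr1 Hr2 Hr3 Hr4]] := Br j2 I Hj2 HI2.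
  have Hab := nb_lt jl j ltac:(lia) Hl2 Hl3.
  have Hbc := nb_lt j jr ltac:(lia) Hj HnS.
  have Hcm := nb_m jr Hr2 Hr3.
  exact: (type_two Hsq Hab Hbc Hcm Hl4 Ec Hr4).
have Hbd : forall j, j \in iota 0 (size w) -> boundary w j = nS (W' j).
  move=> j; rewrite mem_iota add0n Hsz => Hj.
  rewrite /boundary HjW //=.
  rewrite (_ : (anch Sigma K \in nth set0 w j) = (anch Sigma K \in W' j)); last by apply: Fagree.
  rewrite (eq_existsb (fun I => P j I Hj)).
  apply/idP/idP.
    case/orP => [Ha | /existsP [I HI]]; apply/negP => /subsetP Hs.
      by have := Hs _ Ha; rewrite inE.
    by have := Hs _ HI; rewrite inE.
  case/subsetPn => x Hx Hnx.
  case: x Hx Hnx => [[a|k]|[]] Hx Hnx.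
  - by rewrite inE in Hnx.
  - by apply/orP; right; apply/existsP; exists k.
  - by apply/orP; left.
have Helt : forall j, j \in [seq j <- iota 0 (size w) | boundary w j] ->
    elt_of (nth set0 w j) = Some (cseq sq (nb j).+1).
  move=> j; rewrite mem_filter => /andP [Hb Hji].
  have Hj : j < n by move: Hji; rewrite mem_iota Hsz.
  have HnS : nS (W' j) by rewrite -Hbd.
  have [EW Hc] := Fbd j Hj HnS.
  have EW' : nth set0 w j = nth set0 w' j := EW.
  rewrite /elt_of EW'; move: Hc; case: (cseq sq (nb j).+1) => [I|[]] /= Hc.
    have Hna : (anch Sigma K \in nth set0 w' j) = false.
      apply/negP => Ha.
      have := intv_anch I Hiw (HjW j Hj) (ltac:(by rewrite EW')); rewrite EW'.
      by move: Hc => /= ->.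
    rewrite Hna; case: pickP => [I' HI'|/(_ I)] /=.
      congr (Some (inl _)); apply: (coll_eq Hcol (HjW j Hj)); by rewrite EW'.
    by move: Hc => /= ->.
  by move: Hc => /= ->.
exists w; split.
  split => //.
  rewrite /typeof (pmap_some Helt) (eq_in_filter Hbd) Hsz.
  have E : map nb [seq j <- iota 0 n | nS (W' j)] = iota 0 m.
    rewrite -Hcnt; exact: (count_take_iota set0).
  rewrite (_ : map (fun j => cseq sq (nb j).+1) _ = map (nth (inr tt) sq) (map nb [seq j <- iota 0 n | nS (W' j)])); last by rewrite -map_comp.
  by rewrite E; exact: mkseq_nth.
apply: (@eq_from_nth _ set0); first by rewrite /Norm size_map size_iota Hsz.
move=> j Hj.
rewrite /Norm (nth_map 0) ?size_iota ?Hsz // nth_iota ?Hsz // add0n.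
apply/setP => x; rewrite inE.
case: x => [[a|k]|[]].
- by symmetry; apply: Fagree.
- exact: (esym (P j k Hj)).
- by symmetry; apply: Fagree.
Qed.
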